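(* Let $(X_m)_{m\in\mathbb{N}}$ be subspaces of $L_2(0,1)$ with $\dim X_m=m$, and let $Q_m$ denote the orthogonal projection in $L_2(0,1)$ (with its usual inner product) onto $X_m$. Assume there is a constant $L<\infty$ such that $$\inf\{\|x-z\|_0:\ z\in X_m\}\le \frac{L}{m}\|x\|_{1,0}\qquad\text{for all }x\in H_1(0,1),\ m\in\mathbb{N}.$$ Let $\sigma>0$, and define $Q_m^\sigma:=D_\sigma Q_m D_\sigma^{-1}$. Then each $Q_m^\sigma$ is an orthogonal projection with respect to $\langle\cdot,\cdot\rangle_\sigma$ onto the space $D_\sigma X_m$, and $$\inf\{\|x-z\|_\sigma:\ z\in D_\sigma X_m\}\le \frac{\sqrt2(1+\sigma)L}{m}\|x\|_{1,\sigma}\qquad\text{for all }x\in H_1^\sigma(0,1),\ m\in\mathbb{N}.$$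
   Context: All functions are real-valued. For $\sigma\ge0$, $L_2^\sigma(0,1)$ denotes $L_2(0,1)$ equipped with the inner product $\langle x,y\rangle_\sigma=\int_0^1 e^{-2\sigma t}x(t)y(t)\,dt$ and norm $\|x\|_\sigma^2=\int_0^1 e^{-2\sigma t}x(t)^2\,dt$ (so $\|\cdot\|_0$ is the usual $L_2$ norm). $H_1^\sigma(0,1)$ denotes the space of absolutely continuous $x$ with weak derivative $x'\in L_2(0,1)$, with norm $\|x\|_{1,\sigma}:=\frac12\left(\|x\|_\sigma^2+\|x'\|_\sigma^2\right)^{1/2}$; $H_1(0,1)=H_1^0(0,1)$. With $f_\sigma(t)=e^{\sigma t}$, $D_\sigma x:=f_\sigma x$ is the multiplication operator (an isometry from $L_2(0,1)$ onto $L_2^\sigma(0,1)$). *)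

(* Defs.v *)
From mathcomp Require Import all_boot all_order all_algebra.
From mathcomp Require Import all_classical all_reals all_analysis.
Set Implicit Arguments. Unset Strict Implicit. Unset Printing Implicit Defensive.
Import Order.TTheory GRing.Theory Num.Theory.
Local Open Scope classical_set_scope.
Local Open Scope ring_scope.

Section Defs.
Variable R : realType.
Local Notation mu := (@lebesgue_measure R).

(* x is (a representative of) an element of L_2(0,1) *)
Definition L2 (x : R -> R) : Prop :=
  measurable_fun `[(0:R), (1:R)] x /\
  mu.-integrable `[(0:R), (1:R)] (fun t => ((x t) ^+ 2)%:E).

Definition ip (s : R) (x y : R -> R) : R :=
  Rintegral mu `[(0:R), (1:R)] (fun t => expR (- (2 * s * t)) * x t * y t).

Definition nrm (s : R) (x : R -> R) : R := Num.sqrt (ip s x x).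

(* x in H_1(0,1) with (weak) derivative x' in L_2(0,1):
   x is absolutely continuous on [0,1], x(t) = x(0) + int_0^t x'. *)
Definition H1 (x x' : R -> R) : Prop :=
  L2 x' /\ forall t, 0 <= t <= 1 -> x t = x 0 + Rintegral mu `[(0:R), t] x'.

Definition nrm1 (s : R) (x x' : R -> R) : R :=
  2^-1 * Num.sqrt (nrm s x ^+ 2 + nrm s x' ^+ 2).

Definition Dsig (s : R) (x : R -> R) : R -> R := fun t => expR (s * t) * x t.
Definition Dsiginv (s : R) (x : R -> R) : R -> R := fun t => expR (- (s * t)) * x t.

(* V is an m-dimensional subspace of L_2(0,1): spanned by m elements of L_2
   that are linearly independent in L_2 (a combination that vanishes in L_2,
   i.e. has zero L_2 norm, is trivial). *)
Definition is_dim_subspace (V : set (R -> R)) (m : nat) : Prop :=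
  exists b : 'I_m -> R -> R,
    (forall i, L2 (b i)) /\
    (forall c : 'I_m -> R,
        nrm 0 (fun t => \sum_(i < m) c i * b i t) = 0 -> forall i, c i = 0) /\
    V = [set z | exists c : 'I_m -> R, z = (fun t => \sum_(i < m) c i * b i t)].

Definition is_orth_proj (s : R) (V : set (R -> R)) (P : (R -> R) -> (R -> R)) : Prop :=
  forall x, L2 x -> V (P x) /\ forall z, V z -> ip s (fun t => x t - P x t) z = 0.

Definition dist (s : R) (x : R -> R) (V : set (R -> R)) : R :=
  inf [set nrm s (fun t => x t - z t) | z in V].

End Defs.

(* Main.v *)
Require Import Defs.
From mathcomp Require Import all_boot all_order all_algebra.
From mathcomp Require Import all_classical all_reals all_analysis.
From mathcomp Require Import measurable_realfun.
From mathcomp Require Import ring lra.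
Import Order.TTheory GRing.Theory Num.Theory.
Import numFieldNormedType.Exports.
Local Open Scope classical_set_scope.
Local Open Scope ring_scope.

Section S.
Context {R : realType}.
Local Notation mu := (@lebesgue_measure R).
Lemma cont_expM (c : R) : continuous (fun t : R => expR (c * t)).
Proof.
move=> t; apply: continuous_comp; last exact: continuous_expR.
by apply: continuousM; [exact: cst_continuous|exact: cvg_id].
Qed.

Lemma meas_expM (c : R) (A : set R) : measurable_fun A (fun t : R => expR (c * t)).
Proof. exact: measurable_funS (continuous_measurable_fun (cont_expM c)). Qed.

Lemma meas_expN (c : R) (A : set R) : measurable_fun A (fun t : R => expR (- (c * t))).
Proof.
rewrite (_ : (fun t => _) = (fun t : R => expR (- c * t))); first exact: meas_expM.
by apply/funext => t; rewrite mulNr.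
Qed.

Lemma exp2E (s t : R) : expR (- (2 * s * t)) = (expR (s * t))^-1 ^+ 2.
Proof. by rewrite -mulrA expRN expRM_natl exprVn. Qed.

Lemma int_dom (A : set R) (f g : R -> R) : measurable A -> measurable_fun A f ->
  (forall t, A t -> `|f t| <= `|g t|) -> mu.-integrable A (EFin \o g) ->
  mu.-integrable A (EFin \o f).
Proof.
move=> mA mf fg ig; apply: le_integrable ig => //.
  exact/measurable_EFinP.
Qed.

Lemma I01m : measurable (`[0, 1] : set R). Proof. by []. Qed.

Lemma L2_Dsiginv (s : R) (x : R -> R) : 0 <= s -> L2 x -> L2 (Dsiginv s x).
Proof.
move=> s0 [mx ix]; split.
  by apply: measurable_funM => //; exact: meas_expN.
apply: (@int_dom _ _ (fun t => x t ^+ 2)) => //.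
  by apply: measurable_funX; apply: measurable_funM => //; exact: meas_expN.
move=> t /= /andP[t0 _].
rewrite /Dsiginv exprMn !normrM ler_piMl //.
rewrite -normrM -expRD ger0_norm ?expR_ge0 // expR_le1.
have t0' : 0 <= t by move: t0; rewrite bnd_simp.
nra.
Qed.

Lemma part1 (V : set (R -> R)) (P : (R -> R) -> R -> R) (s : R) : 0 <= s ->
  is_orth_proj 0 V P ->
  is_orth_proj s (Dsig s @` V) (fun x => Dsig s (P (Dsiginv s x))).
Proof.
move=> s0 HP x Lx; have [HV Ho] := HP _ (L2_Dsiginv _ _ s0 Lx); split.
  by exists (P (Dsiginv s x)).
move=> _ [z Vz <-]; rewrite -(Ho z Vz) /ip; apply: eq_Rintegral => t _.
rewrite /Dsig /Dsiginv mulr0 mul0r oppr0 expR0 mul1r exp2E expRN.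
have := expR_gt0 (s * t); set a := expR (s * t) => a0.
field; exact: lt0r_neq0.
Qed.

Lemma dlin (s x : R) : is_derive x 1 (fun u : R => - (s * u)) (- s).
Proof.
have H := is_deriveN (is_deriveZ s (@is_derive_id _ _ x 1)).
apply: (is_derive_eq H); by rewrite /GRing.scale/= mulr1.
Qed.
Lemma dE (s x : R) : derivable (fun u : R => expR (- (s * u))) x 1 /\
   (fun u : R => expR (- (s * u)))^`()%classic x = - s * expR (- (s * x)).
Proof.
have h1 := dlin s x.
have [d1 hd1] := h1.
have d2 : derivable (@expR R) (- (s * x)) 1 by exact: derivable_expR.
have -> : (fun u : R => expR (- (s * u))) = expR \o (fun u : R => - (s * u)) by [].
split.
  apply/derivable1_diffP; apply: differentiable_comp; exact/derivable1_diffP.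
rewrite derive1_comp // !derive1E derive_val.
by rewrite hd1 mulrC.
Qed.

Lemma cont_expN (c : R) : continuous (fun t : R => expR (- (c * t))).
Proof.
move=> t; apply: continuous_comp; last exact: continuous_expR.
apply: continuousN; apply: continuousM; [exact: cst_continuous|exact: cvg_id].
Qed.

Lemma wcM (A : set R) (f g : R -> R) : {within A, continuous f} ->
  {within A, continuous g} -> {within A, continuous (fun u => f u * g u)}.
Proof. by move=> cf cg x; apply: continuousM; [exact: cf|exact: cg]. Qed.

Lemma wcD (A : set R) (f g : R -> R) : {within A, continuous f} ->
  {within A, continuous g} -> {within A, continuous (fun u => f u + g u)}.
Proof. by move=> cf cg x; apply: continuousD; [exact: cf|exact: cg]. Qed.

Lemma wcB (A : set R) (f g : R -> R) : {within A, continuous f} ->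
  {within A, continuous g} -> {within A, continuous (fun u => f u - g u)}.
Proof. by move=> cf cg x; apply: continuousB; [exact: cf|exact: cg]. Qed.

Lemma wcst (A : set R) (c : R) : {within A, continuous (fun _ : R => c)}.
Proof. by apply: continuous_subspaceT; exact: cst_continuous. Qed.

Lemma cc_int (a b : R) (f : R -> R) : {within `[a, b], continuous f} ->
  mu.-integrable `[a, b] (EFin \o f).
Proof. by move=> cf; apply: continuous_compact_integrable => //; exact: segment_compact. Qed.

Arguments cc_int {a b f}.
Arguments wcM {A f g}.
Arguments wcD {A f g}.
Arguments wcB {A f g}.
Arguments wcst {A}.

Lemma KLc (g : R -> R) (c s t : R) : continuous g -> 0 < t ->
  \int[mu]_(u in `[0, t]) (expR (- (s * u)) *
     (g u - s * (c + \int[mu]_(v in `[0, u]) g v))) =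
  expR (- (s * t)) * (c + \int[mu]_(v in `[0, t]) g v) - c.
Proof.
move=> cg t0.
pose G u := \int[mu]_(v in `[0, u]) g v.
pose E u := expR (- (s * u)).
pose E' u := - s * E u.
have ig : mu.-integrable `[0, t] (EFin \o g) by apply: cc_int; exact: continuous_subspaceT.
have cG : {within `[0, t], continuous G}.
  exact: (parameterized_integral_continuous (ltW t0) ig).
have cE : {within `[0, t], continuous E} by apply: continuous_subspaceT; exact: cont_expN.
have cE' : {within `[0, t], continuous E'} by apply: wcM => //; exact: wcst.
have cgt : {within `[0, t], continuous g} by exact: continuous_subspaceT.
have dEt : derivable_oo_LRcontinuous E 0 t.
  split.
  - by move=> u _; have [] := dE s u.
  - by apply: cvg_at_right_filter; exact: cont_expN.
  - by apply: cvg_at_left_filter; exact: cont_expN.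
have E'E : {in `]0, t[, E^`()%classic =1 E'} by move=> u _; have [] := dE s u.
have dGt : derivable_oo_LRcontinuous G 0 t.
  have [_ ? ?] := (continuous_within_itvP _ t0).1 cG.
  split => //.
  move=> u; rewrite in_itv/= => /andP[u0 ut].
  by have [] := continuous_FTC1_closed ut ig u0 (cg u).
have G'g : {in `]0, t[, G^`()%classic =1 g}.
  move=> u; rewrite in_itv/= => /andP[u0 ut].
  by have [] := continuous_FTC1_closed ut ig u0 (cg u).
have d1t : derivable_oo_LRcontinuous (cst (1:R)) 0 t.
  split; [by move=> u _; exact: derivable_cst|exact: cvg_cst|exact: cvg_cst].
have c10 : {in `]0, t[, (cst (1:R))^`()%classic =1 cst 0} by move=> u _; exact: derive1_cst.
have IBP1 := Rintegration_by_parts t0 cE' dEt E'E cgt dGt G'g.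
have IBP2 := Rintegration_by_parts t0 cE' dEt E'E (wcst 0) d1t c10.
have G0 : G 0 = 0 by rewrite /G set_itv1 Rintegral_set1.
have E0 : E 0 = 1 by rewrite /E mulr0 oppr0 expR0.
have iE := cc_int cE.
have iEG := cc_int (wcM cE cG).
have iEg := cc_int (wcM cE cgt).
have Z0 : \int[mu]_(x in `[0, t]) (E x * 0) = 0.
  by under eq_Rintegral do rewrite mulr0; rewrite Rintegral_cst // mul0r.
have ZG : \int[mu]_(x in `[0, t]) (E' x * G x) = - s * \int[mu]_(x in `[0, t]) (E x * G x).
  by rewrite -RintegralZl //; apply: eq_Rintegral => u _; rewrite /E' mulrA.
have Z1 : \int[mu]_(x in `[0, t]) (E' x * cst 1 x) = - s * \int[mu]_(x in `[0, t]) E x.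
  by rewrite -RintegralZl //; apply: eq_Rintegral => u _; rewrite /E' mulr1.
rewrite Z0 Z1 E0 /cst mulr1 mulr1 in IBP2.
rewrite ZG E0 G0 mulr0 subr0 in IBP1.
transitivity (\int[mu]_(u in `[0, t]) ((E u * g u - (s * c) * E u) - s * (E u * G u))).
  by apply: eq_Rintegral => u _; rewrite /E /G; ring.
rewrite RintegralB //; last 2 first.
- by apply: cc_int; apply: wcB; [exact: wcM cE cgt|exact: wcM (wcst _) cE].
- by apply: cc_int; apply: wcM (wcst _) (wcM cE cG).
rewrite RintegralB //; last exact: cc_int (wcM (wcst _) cE).
rewrite RintegralZl // RintegralZl // IBP1.
rewrite -/(G t) -/(E t).
nra.
Qed.

Lemma sub01 (u : R) : 0 <= u -> u <= 1 -> `[0, u] `<=` (`[0, 1] : set R).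
Proof.
move=> u0 u1 x; rewrite /= !in_itv /= => /andP[x0 xu].
by rewrite x0 (le_trans xu u1).
Qed.
Arguments sub01 {u}.

Lemma int_sub (h : R -> R) (u : R) : 0 <= u -> u <= 1 ->
  mu.-integrable `[0, 1] (EFin \o h) -> mu.-integrable `[0, u] (EFin \o h).
Proof. by move=> u0 u1; apply: integrableS => //; exact: sub01. Qed.
Arguments int_sub {h u}.

Lemma Rint_abs_sub (h : R -> R) (u : R) : 0 <= u -> u <= 1 ->
  mu.-integrable `[0, 1] (EFin \o h) ->
  \int[mu]_(x in `[0, u]) `|h x| <= \int[mu]_(x in `[0, 1]) `|h x|.
Proof.
move=> u0 u1 ih; have ia := integrable_norm ih.
have iu := int_sub u0 u1 ia.
rewrite /Rintegral; apply: fine_le.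
- by apply: integrable_fin_num => //; exact: iu.
- by apply: integrable_fin_num => //; exact: ia.
apply: ge0_subset_integral => //; last exact: sub01.
  by move/measurable_int : ia.
Qed.
Arguments Rint_abs_sub {h u}.

Lemma Fbound (h : R -> R) (u : R) : 0 <= u -> u <= 1 ->
  mu.-integrable `[0, 1] (EFin \o h) ->
  `| \int[mu]_(x in `[0, u]) h x | <= \int[mu]_(x in `[0, 1]) `|h x|.
Proof.
move=> u0 u1 ih; have H := Rint_abs_sub u0 u1 ih.
have H1 : `| \int[mu]_(x in `[0, u]) h x | <= \int[mu]_(x in `[0, u]) `|h x|.
  by apply: le_normr_Rintegral => //; exact: int_sub.
exact: le_trans H1 H.
Qed.

Lemma rintB (a b : R) (f g : R -> R) :
  mu.-integrable `[a, b] (EFin \o f) -> mu.-integrable `[a, b] (EFin \o g) ->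
  mu.-integrable `[a, b] (EFin \o (fun u => f u - g u)).
Proof.
move=> fi gi; apply: (eq_integrable _ _ _ _ (integrableB _ fi gi)) => //.
Qed.

Lemma rintD (a b : R) (f g : R -> R) :
  mu.-integrable `[a, b] (EFin \o f) -> mu.-integrable `[a, b] (EFin \o g) ->
  mu.-integrable `[a, b] (EFin \o (fun u => f u + g u)).
Proof.
move=> fi gi; apply: (eq_integrable _ _ _ _ (integrableD _ fi gi)) => //.
Qed.

Lemma rintZ (a b : R) (k : R) (f : R -> R) :
  mu.-integrable `[a, b] (EFin \o f) -> mu.-integrable `[a, b] (EFin \o (fun u => k * f u)).
Proof.
move=> fi; apply: (eq_integrable _ _ _ _ (integrableZl _ k fi)) => //.
Qed.


Arguments rintB {a b f g}.
Arguments rintD {a b f g}.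
Arguments rintZ {a b} k {f}.

Lemma E_le1 (s u : R) : 0 <= s -> 0 <= u -> expR (- (s * u)) <= 1.
Proof. by move=> s0 u0; rewrite expR_le1 oppr_le0 mulr_ge0. Qed.
Arguments E_le1 {s u}.

Lemma intEh (s a b : R) (h : R -> R) : 0 <= s -> 0 <= a ->
  mu.-integrable `[a, b] (EFin \o h) ->
  mu.-integrable `[a, b] (EFin \o (fun u => expR (- (s * u)) * h u)).
Proof.
move=> s0 a0 ih; apply: (int_dom _ _ h) => //.
  apply: measurable_funM; first exact: meas_expN.
  by apply/measurable_EFinP; exact: (measurable_int _ ih).
move=> u; rewrite /= in_itv /= => /andP[au _].
rewrite normrM ger0_norm ?expR_ge0 // ler_piMl // E_le1 //.
exact: le_trans au.
Qed.

Lemma muI (t : R) : 0 <= t -> fine (mu `[0, t]) = t.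
Proof. by move=> t0; rewrite lebesgue_measure_itv /= lte_fin; case: ltP => //= ?; [rewrite subr0 | apply/eqP; rewrite eq_le t0; lra]. Qed.

Lemma intA (h : R -> R) (c s t : R) : 0 <= s -> 0 < t -> t <= 1 ->
  mu.-integrable `[0, 1] (EFin \o h) ->
  mu.-integrable `[0, t] (EFin \o (fun u => expR (- (s * u)) *
     (h u - s * (c + \int[mu]_(v in `[0, u]) h v)))).
Proof.
move=> s0 tp t1 ih; have iht := int_sub (ltW tp) t1 ih.
have cF : {within `[0, t], continuous (fun u => \int[mu]_(v in `[0, u]) h v)}.
  exact: (parameterized_integral_continuous (ltW tp) iht).
have cE : {within `[0, t], continuous (fun u => expR (- (s * u)))}.
  by apply: continuous_subspaceT; exact: cont_expN.
have i2 := cc_int (wcM cE (wcM (wcst s) (wcD (wcst c) cF))).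
have i1 := intEh _ _ _ _ s0 (lexx 0) iht.
apply: (eq_integrable _ _ _ _ (integrableB _ i1 i2)) => //.
by move=> u _ /=; rewrite -EFinB; congr EFin; ring.
Qed.

Lemma KLbound (f g : R -> R) (c s t : R) : 0 <= s -> 0 < t -> t <= 1 ->
  mu.-integrable `[0, 1] (EFin \o f) -> continuous g ->
  mu.-integrable `[0, 1] (EFin \o g) ->
  `| \int[mu]_(u in `[0, t]) (expR (- (s * u)) *
       (f u - s * (c + \int[mu]_(v in `[0, u]) f v))) -
     (expR (- (s * t)) * (c + \int[mu]_(v in `[0, t]) f v) - c) |
  <= (2 + s) * \int[mu]_(u in `[0, 1]) `|f u - g u|.
Proof.
move=> s0 tp t1 iF cg iG.
have ABg := KLc g c s t cg tp.
set Af := \int[mu]_(u in `[0, t]) _.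
set Ag := \int[mu]_(u in `[0, t]) _ in ABg.
set Bg := (X in _ = X) in ABg.
set Bf := (X in `| _ - X |).
pose D u := f u - g u.
have iD : mu.-integrable `[0, 1] (EFin \o D) by exact: rintB.
pose d := \int[mu]_(u in `[0, 1]) `|D u|.
have d0 : 0 <= d by apply: Rintegral_ge0 => u _.
have FD : forall u, 0 <= u -> u <= 1 ->
    \int[mu]_(v in `[0, u]) f v - \int[mu]_(v in `[0, u]) g v =
    \int[mu]_(v in `[0, u]) D v.
  by move=> u u0 u1; rewrite -RintegralB //; [exact: int_sub | exact: int_sub].
have FDb : forall u, 0 <= u -> u <= 1 -> `| \int[mu]_(v in `[0, u]) D v | <= d.
  by move=> u u0 u1; exact: Fbound.
have -> : Af - Bf = (Af - Ag) - (Bf - Bg) by rewrite ABg; ring.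
have HB : `|Bf - Bg| <= d.
  rewrite /Bf /Bg (_ : _ - _ = expR (- (s * t)) * (\int[mu]_(v in `[0, t]) f v - \int[mu]_(v in `[0, t]) g v)); last by ring.
  rewrite FD ?(ltW tp) // normrM ger0_norm ?expR_ge0 //.
  rewrite -[d]mul1r; apply: ler_pM => //.
    exact: E_le1 (ltW tp).
  exact: FDb (ltW tp) t1.
have iDt : mu.-integrable `[0, t] (EFin \o D) := int_sub (ltW tp) t1 iD.
pose k u := expR (- (s * u)) * (D u - s * \int[mu]_(v in `[0, u]) D v).
have HA : Af - Ag = \int[mu]_(u in `[0, t]) k u.
  rewrite /Af /Ag -RintegralB //; last 2 first.
  - exact: intA.
  - exact: intA.
  apply: eq_Rintegral => u; rewrite inE /= in_itv /= => /andP[u0 ut].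
  rewrite /k -(FD u u0 (le_trans ut t1)) /D; ring.
have ik : mu.-integrable `[0, t] (EFin \o k).
  have := rintB (intA _ c _ _ s0 tp t1 iF) (intA _ c _ _ s0 tp t1 iG).
  apply: (eq_integrable _ _ _ _) => //.
  move=> u; rewrite inE /= in_itv /= => /andP[u0 ut] /=.
  by rewrite /k -(FD u u0 (le_trans ut t1)) /D; congr EFin; ring.
have HA' : `|Af - Ag| <= d + s * d.
  rewrite HA; apply: le_trans (le_normr_Rintegral _ ik) _ => //.
  apply: (@le_trans _ _ (\int[mu]_(u in `[0, t]) (`|D u| + s * d))).
    apply: le_Rintegral => //.
    - exact: integrable_norm.
    - apply: rintD; first exact: integrable_norm.
      exact: cc_int (wcst _).
    move=> u; rewrite /= in_itv /= => /andP[u0 ut].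
    rewrite /k normrM ger0_norm ?expR_ge0 //.
    apply: (@le_trans _ _ (`|D u - s * \int[mu]_(v in `[0, u]) D v|)).
      by rewrite ler_piMl // E_le1.
    apply: le_trans (ler_normB _ _) _; rewrite lerD2l normrM ger0_norm //.
    by apply: ler_wpM2l => //; exact: FDb u0 (le_trans ut t1).
  rewrite RintegralD //; last 2 first.
  - exact: integrable_norm.
  - exact: cc_int (wcst _).
  rewrite Rintegral_cst // muI ?(ltW tp) //.
  apply: lerD; first exact: Rint_abs_sub (ltW tp) t1 iD.
  by rewrite -[leRHS]mulr1 ler_wpM2l // mulr_ge0.
apply: le_trans (ler_normB _ _) _.
rewrite (_ : (2 + s) * d = (d + s * d) + d); last by ring.
exact: lerD.
Qed.

Lemma KL (f : R -> R) (c s t : R) : 0 <= s ->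
  mu.-integrable `[0, 1] (EFin \o f) -> 0 <= t -> t <= 1 ->
  \int[mu]_(u in `[0, t]) (expR (- (s * u)) *
       (f u - s * (c + \int[mu]_(v in `[0, u]) f v))) =
  expR (- (s * t)) * (c + \int[mu]_(v in `[0, t]) f v) - c.
Proof.
move=> s0 iF t0 t1.
have [->|tn0] := eqVneq t 0.
  by rewrite !set_itv1 !Rintegral_set1 mulr0 oppr0 expR0 mul1r addr0 subrr.
have tp : 0 < t by rewrite lt_neqAle eq_sym tn0 t0.
apply/eqP; rewrite -subr_eq0 -normr_le0.
apply/ler_addgt0Pr => e e0; rewrite add0r.
have muf : (mu (`[0%R, 1%R] : set R) < +oo)%E by rewrite lebesgue_measure_itv /= lte_fin ltr01 -EFinD ltry.
have [|g_ [cg ig hcvg]] := approximation_continuous_integrable _ muf iF; first by [].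
pose e' := e / (2 + s).
have s2 : 0 < 2 + s by rewrite ltr_wpDr.
have e'0 : 0 < e' by rewrite divr_gt0.
have e'E : (0 < e'%:E)%E by rewrite lte_fin.
have := hcvg _ (open_ereal_lt' e'E).
case=> N _ /(_ N (leqnn N)) /= HN.
apply: (le_trans (KLbound _ _ _ _ _ s0 tp t1 iF (cg N) (ig N))).
have ->: e = (2 + s) * e' by rewrite /e' mulrC divfK // gt_eqF.
rewrite ler_pM2l //; apply/ltW.
rewrite /Rintegral -lte_fin fineK.
  by under eq_integral do rewrite -abse_EFin EFinB.
rewrite ge0_fin_numE; last by apply: integral_ge0 => u _; rewrite lee_fin.
apply: le_lt_trans (ltry e'); apply/ltW.
by under eq_integral do rewrite -abse_EFin EFinB.
Qed.

Lemma L2_int (f : R -> R) : L2 f -> mu.-integrable `[0, 1] (EFin \o f).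
Proof.
move=> [mf i2]; apply: (int_dom _ _ (fun t => 1 + f t ^+ 2)) => //.
  move=> t _; have h := normr_ge0 (f t); rewrite -[f t ^+ 2](real_normK (num_real _)).
  set b := `|f t|; rewrite ger0_norm; first nra.
  by rewrite addr_ge0 // exprn_ge0.
exact: rintD (cc_int (wcst 1)) i2.
Qed.

Section H1sec.
Variables (s : R) (x x' : R -> R).
Hypothesis s0 : 0 <= s.
Hypothesis Hx : H1 x x'.

Let ix' : mu.-integrable `[0, 1] (EFin \o x') := L2_int _ (Hx.1).
Let F u := \int[mu]_(v in `[0, u]) x' v.
Let xt u := x 0 + F u.
Let cxt : {within `[0, 1], continuous xt}.
Proof.
apply: wcD; first exact: wcst.
exact: (parameterized_integral_continuous ler01 ix').
Qed.
Let xE u : 0 <= u <= 1 -> x u = xt u.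
Proof. exact: Hx.2. Qed.

Lemma mx : measurable_fun `[(0:R), (1:R)] x.
Proof.
apply: (eq_measurable_fun xt).
  by move=> u /set_mem; rewrite /= in_itv /= => /xE ->.
by apply: subspace_continuous_measurable_fun => //.
Qed.

Lemma ix2 : mu.-integrable `[0, 1] (EFin \o (fun u => x u ^+ 2)).
Proof.
have := cc_int (wcM cxt cxt).
apply: (eq_integrable _ _ _ _) => // u /set_mem; rewrite /= in_itv /= => /xE ->.
by rewrite expr2.
Qed.

Definition yy := Dsiginv s x.
Definition yy' u := expR (- (s * u)) * (x' u - s * x u).

Lemma L2yy' : L2 yy'.
Proof.
have [mx' ix'2] := Hx.1.
split.
  apply: measurable_funM; first exact: meas_expN.
  apply: measurable_funB => //; apply: measurable_funM => //; exact: mx.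
apply: (int_dom _ _ (fun u => 2 * x' u ^+ 2 + 2 * s ^+ 2 * x u ^+ 2)) => //.
- apply: measurable_funX; apply: measurable_funM; first exact: meas_expN.
  apply: measurable_funB => //; apply: measurable_funM => //; exact: mx.
- move=> u; rewrite /= in_itv /= => /andP[u0 u1].
  have e1 := E_le1 s0 u0; have e0 := expR_ge0 (- (s * u)).
  rewrite ger0_norm ?sqr_ge0 // ger0_norm; last first.
    by rewrite addr_ge0 // mulr_ge0 // ?sqr_ge0 // mulr_ge0 // sqr_ge0.
  rewrite /yy'; set E := expR _; set a := x' u; set b := x u.
  have : (a - s * b) ^+ 2 <= 2 * a ^+ 2 + 2 * s ^+ 2 * b ^+ 2.
    rewrite -subr_ge0 (_ : _ - _ = (a + s * b) ^+ 2); first exact: sqr_ge0.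
    by ring.
  have e1' : E <= 1 := e1.
  have e0' : 0 <= E := e0.
  have : E ^+ 2 <= 1 by nra.
  have : 0 <= (a - s * b) ^+ 2 by exact: sqr_ge0.
  rewrite exprMn; nra.
- apply: rintD; first exact: rintZ ix'2.
  exact: rintZ ix2.
Qed.

Lemma H1yy : H1 yy yy'.
Proof.
split; first exact: L2yy'.
move=> t /andP[t0 t1].
rewrite /yy /Dsiginv mulr0 oppr0 expR0 mul1r.
transitivity (x 0 + (expR (- (s * t)) * (x 0 + F t) - x 0)); last first.
  congr (_ + _); rewrite -(KL _ (x 0) _ _ s0 ix' t0 t1).
  apply: eq_Rintegral => u; rewrite inE /= in_itv /= => /andP[u0 ut].
  rewrite /yy' (Hx.2 u); last by rewrite u0 (le_trans ut t1).
  by [].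
by rewrite (Hx.2 t) ?t0 ?t1 // addrCA subrr addr0.
Qed.

End H1sec.

Lemma nrm_eq (s : R) (x z : R -> R) :
  nrm s (fun t => x t - Dsig s z t) = nrm 0 (fun t => Dsiginv s x t - z t).
Proof.
rewrite /nrm /ip; congr Num.sqrt; apply: eq_Rintegral => t _.
rewrite /Dsig /Dsiginv mulr0 mul0r oppr0 expR0 mul1r exp2E expRN.
have := expR_gt0 (s * t); set a := expR (s * t) => a0.
field; exact: lt0r_neq0.
Qed.

Lemma dist_eq (s : R) (x : R -> R) (V : set (R -> R)) :
  dist s x (Dsig s @` V) = dist 0 (Dsiginv s x) V.
Proof.
rewrite /dist; congr inf; apply/seteqP; split => r.
  by case=> _ [z Vz <-] <-; exists z => //; rewrite nrm_eq.
by case=> z Vz <-; exists (Dsig s z); [exists z|rewrite nrm_eq].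
Qed.

Lemma ip_yy (s : R) (x : R -> R) : ip 0 (Dsiginv s x) (Dsiginv s x) = ip s x x.
Proof.
rewrite /ip; apply: eq_Rintegral => t _.
rewrite /Dsiginv mulr0 mul0r oppr0 expR0 mul1r exp2E expRN.
have := expR_gt0 (s * t); set a := expR (s * t) => a0.
field; exact: lt0r_neq0.
Qed.

Lemma ip_ge0 (s : R) (x : R -> R) : 0 <= ip s x x.
Proof.
apply: Rintegral_ge0 => t _; rewrite -mulrA mulr_ge0 ?expR_ge0 //.
by rewrite -expr2 sqr_ge0.
Qed.

Lemma intW (s : R) (f : R -> R) : 0 <= s -> L2 f ->
  mu.-integrable `[0, 1] (EFin \o (fun t => expR (- (2 * s * t)) * f t * f t)).
Proof.
move=> s0 [mf i2]; apply: (int_dom _ _ (fun t => f t ^+ 2)) => //.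
  apply: measurable_funM => //; apply: measurable_funM => //.
  by rewrite (_ : (fun t => _) = (fun t => expR (- ((2 * s) * t)))); [exact: meas_expN|].
move=> t; rewrite /= in_itv /= => /andP[t0 _].
rewrite -mulrA -expr2 normrM ger0_norm ?expR_ge0 // ler_piMl //.
by rewrite -mulrA E_le1 // mulr_ge0.
Qed.

Lemma ip_bound (s : R) (x x' : R -> R) : 0 <= s -> H1 x x' ->
  ip 0 (yy' s x x') (yy' s x x') <= 2 * ip s x' x' + 2 * s ^+ 2 * ip s x x.
Proof.
move=> s0 Hx.
have [mx' ix'2] := Hx.1.
have Lx : L2 x by split; [exact: mx Hx|exact: ix2 Hx].
have iy : mu.-integrable `[0, 1]
    (EFin \o (fun t => expR (- (2 * 0 * t)) * yy' s x x' t * yy' s x x' t)).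
  have [_ i] := L2yy' _ _ _ s0 Hx.
  apply: (eq_integrable _ _ _ _ i) => // t _ /=.
  by rewrite mulr0 mul0r oppr0 expR0 mul1r expr2.
rewrite /ip -RintegralZl //; last exact: intW.
rewrite -RintegralZl //; last exact: intW.
rewrite -RintegralD //; last 2 first.
- by apply: rintZ; exact: intW.
- by apply: rintZ; exact: intW.
apply: le_Rintegral => //.
  by apply: rintD; apply: rintZ; exact: intW.
move=> t _; rewrite /yy' mulr0 mul0r oppr0 expR0 mul1r exp2E -expRN.
set E := expR _; set a := x' t; set b := x t.
have : (a - s * b) ^+ 2 <= 2 * a ^+ 2 + 2 * s ^+ 2 * b ^+ 2.
  rewrite -subr_ge0 (_ : _ - _ = (a + s * b) ^+ 2); first exact: sqr_ge0.
  by ring.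
have : 0 <= E ^+ 2 by exact: sqr_ge0.
nra.
Qed.

Lemma dist_ge0 (s : R) (x : R -> R) (V : set (R -> R)) : 0 <= dist s x V.
Proof.
rewrite /dist; set S := [set _ | _ in _].
have [[r Sr]|S0] := pselect (exists r, S r).
  apply: lb_le_inf; first by exists r.
  by move=> _ [z _ <-]; exact: sqrtr_ge0.
rewrite (_ : S = set0) ?inf0 //; apply/seteqP; split => // r Sr.
by exfalso; apply: S0; exists r.
Qed.

Lemma H1c : H1 (fun _ : R => 1) (fun _ : R => 0).
Proof.
split.
  split; first exact: measurable_cst.
  have := cc_int (@wcst `[0, 1] 0); apply: (eq_integrable _ _ _ _) => // t _ /=.
  by rewrite expr0n.
by move=> t _; rewrite Rintegral_cst // mul0r addr0.
Qed.

Lemma nrm1c : nrm1 0 (fun _ : R => 1) (fun _ : R => 0) = 2^-1.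
Proof.
rewrite /nrm1 /nrm /ip.
rewrite (_ : \int[mu]_(t in `[0, 1]) _ = 1); last first.
  under eq_Rintegral do rewrite mulr0 mul0r oppr0 expR0 !mulr1.
  by rewrite Rintegral_cst // muI // mul1r.
rewrite (_ : \int[mu]_(t in `[0, 1]) _ = 0); last first.
  under eq_Rintegral do rewrite mulr0.
  by rewrite Rintegral_cst // mul0r.
by rewrite sqrtr1 sqrtr0 expr1n expr0n addr0 sqrtr1 mulr1.
Qed.

Lemma final_alg (s A B C : R) : 0 <= s -> 0 <= A -> 0 <= C ->
  B <= 2 * C + 2 * s ^+ 2 * A ->
  2^-1 * Num.sqrt (A + B) <= Num.sqrt 2 * (1 + s) * (2^-1 * Num.sqrt (A + C)).
Proof.
move=> s0 A0 C0 hB.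
rewrite mulrCA; apply: ler_wpM2l; first by rewrite invr_ge0.
have h : A + B <= (2 * (1 + s) ^+ 2) * (A + C) by nra.
apply: le_trans (ler_wsqrtr h) _.
rewrite (sqrtrM (A + C)); last by rewrite mulr_ge0 // sqr_ge0.
rewrite (sqrtrM ((1 + s) ^+ 2)) // sqrtr_sqr ger0_norm //.
by rewrite addr_ge0.
Qed.
End S.

Theorem lemma2p6 (R : realType) (X : nat -> set (R -> R))
  (Q : nat -> (R -> R) -> (R -> R)) (L s : R) :
  (forall m : nat, (0 < m)%N -> is_dim_subspace (X m) m) ->
  (forall m : nat, (0 < m)%N -> is_orth_proj 0 (X m) (Q m)) ->
  (forall (x x' : R -> R) (m : nat), (0 < m)%N -> H1 x x' ->
      dist 0 x (X m) <= L / m%:R * nrm1 0 x x') ->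
  0 < s ->
  forall m : nat, (0 < m)%N ->
    is_orth_proj s (Dsig s @` X m) (fun x => Dsig s (Q m (Dsiginv s x))) /\
    (forall x x' : R -> R, H1 x x' ->
      dist s x (Dsig s @` X m) <= Num.sqrt 2 * (1 + s) * L / m%:R * nrm1 s x x').
Proof.
move=> Hdim HQ Happ sp m m0; have s0 := ltW sp; split.
  by apply: part1 => //; exact: HQ.
move=> x x' Hx.
have mp : 0 < (m%:R : R) by rewrite ltr0n.
have Lm0 : 0 <= L / m%:R.
  have H := Happ _ _ m m0 H1c; rewrite nrm1c in H.
  have := le_trans (dist_ge0 _ _ _) H.
  by rewrite pmulr_lge0 // invr_gt0.
rewrite dist_eq.
apply: le_trans (Happ _ _ m m0 (H1yy _ _ _ s0 Hx)) _.
rewrite (_ : Num.sqrt 2 * (1 + s) * L / m%:R * nrm1 s x x' =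
   L / m%:R * (Num.sqrt 2 * (1 + s) * nrm1 s x x')); last by ring.
apply: ler_wpM2l => //.
rewrite /nrm1 /nrm !sqr_sqrtr ?ip_ge0 // /yy ip_yy.
apply: final_alg => //; try exact: ip_ge0.
exact: ip_bound.
Qed.
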